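(* Let $E$ be a graph satisfying Condition (K), and let $v\in E^0$ support at least two distinct return paths. Then the map $\mathbb{AP}(E)\to\mathbb{AP}(E_C^v)$ given by $(H,B)\mapsto(H,B)$ if $v\notin H$ and $(H,B)\mapsto(H\cup\{u_1,u_2\},B)$ if $v\in H$ is a well-defined order isomorphism.
   Context: A graph $E=(E^0,E^1,r,s)$ consists of countable sets $E^0$ (vertices) and $E^1$ (edges) and maps $r,s\colon E^1\to E^0$. A path is a finite sequence $\mu=e_1\cdots e_n$ ($n\ge1$) of edges with $r(e_i)=s(e_{i+1})$; $s(\mu)=s(e_1)$, $r(\mu)=r(e_n)$. Write $w\ge w'$ if there is a path from $w$ to $w'$. A return path is a path $\mu=e_1\cdots e_n$ with $s(\mu)=r(\mu)$ and $r(e_i)\neq r(\mu)$ for $i<n$; a vertex $w$ supports $\mu$ if $s(\mu)=w$. $E$ satisfies Condition (K) if no vertex supports precisely one return path. A vertex is regular if it emits a finite nonzero number of edges, and an infinite emitter if it emits infinitely many. A subset $K\subseteq E^0$ is hereditary if $w\in K$ and $w\ge w'$ imply $w'\in K$, and saturated if every regular vertex $w$ all of whose emitted edges have range in $K$ lies in $K$. For hereditary saturated $H$, $H_\infty^{\mathrm{fin}}$ is the set of infinite emitters in $E^0\setminus H$ emitting a finite nonzero number of edges with range in $E^0\setminus H$. An admissible pair is $(H,B)$ with $H$ hereditary and saturated and $B\subseteq H_\infty^{\mathrm{fin}}$; $\mathbb{AP}(E)$ denotes the set of admissible pairs, partially ordered by $(H,B)\le(H',B')$ iff $H\subseteq H'$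 and $B\subseteq H'\cup B'$. The Cuntz Splice $E_C^v$ of $E$ at $v$ is the graph with vertex set $E^0\sqcup\{u_1,u_2\}$ and edge set $E^1\sqcup\{f_1,f_2,h_1,h_2,k_1,k_2\}$, old edges keeping range and source, with $f_1\colon v\to u_1$, $f_2\colon u_1\to v$, $h_1\colon u_1\to u_1$, $h_2\colon u_1\to u_2$, $k_1\colon u_2\to u_1$, $k_2\colon u_2\to u_2$ ($e\colon a\to b$ means $s(e)=a$, $r(e)=b$). *)

(* Defs.v *)
From Stdlib Require Import List.
Import ListNotations.


(* A graph E = (E^0, E^1, r, s). Countability is a separate predicate. *)
Record graph := Graph {
  vert : Type;
  edge : Type;
  rg : edge -> vert;
  sc : edge -> vert }.
Arguments rg {g} _.
Arguments sc {g} _.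

Definition countable (T : Type) : Prop := exists f : T -> nat, forall x y, f x = f y -> x = y.
Definition countable_graph (E : graph) : Prop := countable (vert E) /\ countable (edge E).

Section G.
Variable E : graph.

Fixpoint chain (l : list (edge E)) : Prop :=
  match l with
  | e :: ((f :: _) as t) => rg e = sc f /\ chain t
  | _ => True
  end.

Definition path_from_to (mu : list (edge E)) (w w' : vert E) : Prop :=
  mu <> [] /\ chain mu /\
  (exists e t, mu = e :: t /\ sc e = w) /\
  (exists p e, mu = p ++ [e] /\ rg e = w').

Definition geq (w w' : vert E) : Prop := exists mu, path_from_to mu w w'.

Definition return_path (w : vert E) (mu : list (edge E)) : Prop :=
  path_from_to mu w w /\
  forall p e q, mu = p ++ e :: q -> q <> [] -> rg e <> w.

Definition condK : Prop :=
  forall w, ~ (exists mu, return_path w mu /\ forall nu, return_path w nu -> nu = mu).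

Definition fin_edges (P : edge E -> Prop) : Prop :=
  exists l : list (edge E), forall e, P e -> In e l.

Definition regular (w : vert E) : Prop :=
  fin_edges (fun e => sc e = w) /\ exists e, sc e = w.

Definition infinite_emitter (w : vert E) : Prop :=
  ~ fin_edges (fun e => sc e = w).

Definition hereditary (K : vert E -> Prop) : Prop :=
  forall w w', K w -> geq w w' -> K w'.

Definition saturated (K : vert E -> Prop) : Prop :=
  forall w, regular w -> (forall e, sc e = w -> K (rg e)) -> K w.

Definition Hinf_fin (H : vert E -> Prop) (w : vert E) : Prop :=
  infinite_emitter w /\ ~ H w /\
  fin_edges (fun e => sc e = w /\ ~ H (rg e)) /\
  (exists e, sc e = w /\ ~ H (rg e)).

Definition admissible (H B : vert E -> Prop) : Prop :=
  hereditary H /\ saturated H /\ forall w, B w -> Hinf_fin H w.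

Definition ap_le (H B H' B' : vert E -> Prop) : Prop :=
  (forall w, H w -> H' w) /\ (forall w, B w -> H' w \/ B' w).

End G.

Inductive newV := u1 | u2.
Inductive newE := f1 | f2 | h1 | h2 | k1 | k2.

Section Splice.
Variables (E : graph) (v : vert E).

Definition splice_r (e : edge E + newE) : vert E + newV :=
  match e with
  | inl e => inl (rg e)
  | inr f1 => inr u1 | inr f2 => inl v
  | inr h1 => inr u1 | inr h2 => inr u2
  | inr k1 => inr u1 | inr k2 => inr u2
  end.

Definition splice_s (e : edge E + newE) : vert E + newV :=
  match e with
  | inl e => inl (sc e)
  | inr f1 => inl v | inr f2 => inr u1
  | inr h1 => inr u1 | inr h2 => inr u1
  | inr k1 => inr u2 | inr k2 => inr u2
  end.

Definition cuntz_splice : graph :=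
  @Graph (vert E + newV) (edge E + newE) splice_r splice_s.

Definition phiH (H : vert E -> Prop) (w : vert cuntz_splice) : Prop :=
  match w with
  | inl x => H x
  | inr _ => H v
  end.

Definition phiB (B : vert E -> Prop) (w : vert cuntz_splice) : Prop :=
  match w with
  | inl x => B x
  | inr _ => False
  end.

End Splice.

(* Main.v *)
Require Import Defs.
From Stdlib Require Import List Classical.
Import ListNotations.

Lemma chain_last (g : graph) (K : vert g -> Prop) :
  (forall e, K (sc e) -> K (rg e)) ->
  forall mu e, chain g (e :: mu) -> K (rg e) ->
  forall p e', e :: mu = p ++ [e'] -> K (rg e').
Proof.
  intros Hst mu. induction mu as [|f t IH]; intros e Hch Hk p e' Heq.
  - destruct p as [|a p]; simpl in Heq.
    + injection Heq as ->. exact Hk.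
    + injection Heq as _ Heq. destruct p; discriminate.
  - simpl in Hch. destruct Hch as [Hrs Hch].
    destruct p as [|a p]; simpl in Heq.
    + discriminate.
    + injection Heq as _ Heq. apply (IH f Hch (ltac:(apply Hst; rewrite <- Hrs; exact Hk)) p).
      exact Heq.
Qed.

Lemma path_back (g : graph) (K : vert g -> Prop) :
  (forall e, K (sc e) -> K (rg e)) ->
  forall mu w w', path_from_to g mu w w' -> forall e t, mu = e :: t -> K (rg e) -> K w'.
Proof.
  intros Hst mu w w' [_ [Hch [_ [p [e' [Hm Hr]]]]]] e t Het Hk.
  subst mu. rewrite <- Hr. rewrite Het in Hch. exact (chain_last g K Hst t e Hch Hk p e' (eq_sym Het)).
Qed.

Lemma her_step (g : graph) (K : vert g -> Prop) :
  (forall e, K (sc e) -> K (rg e)) -> hereditary g K.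
Proof.
  intros Hst w w' Hw [mu Hp].
  pose proof Hp as [_ [_ [[e [t [Hm Hs]]] _]]].
  eapply (path_back g K Hst mu w w' Hp e t Hm). apply Hst. rewrite Hs. exact Hw.
Qed.

Lemma step_her (g : graph) (K : vert g -> Prop) :
  hereditary g K -> forall e, K (sc e) -> K (rg e).
Proof.
  intros Hh e He. apply (Hh (sc e)); auto. exists [e].
  split; [discriminate|]. split; [simpl; auto|]. split.
  - exists e, []. auto.
  - exists [], e. auto.
Qed.

Definition unl {A B : Type} (x : A + B) : list A :=
  match x with inl a => [a] | inr _ => [] end.

Lemma unl_in {A B : Type} (a : A) (l : list (A + B)) :
  In (inl a) l -> In a (flat_map unl l).
Proof.
  intros H. apply in_flat_map. exists (inl a). simpl. auto.
Qed.

Theorem proposition2p9 (E : graph) (v : vert E) :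
  countable_graph E ->
  condK E ->
  (exists mu nu, return_path E v mu /\ return_path E v nu /\ mu <> nu) ->
  (* well-defined: the image of an admissible pair is admissible in E_C^v *)
  (forall H B, admissible E H B ->
     admissible (cuntz_splice E v) (phiH E v H) (phiB E v B)) /\
  (* order embedding: (H,B) <= (H',B') iff their images are comparable *)
  (forall H B H' B', admissible E H B -> admissible E H' B' ->
     (ap_le E H B H' B' <->
      ap_le (cuntz_splice E v) (phiH E v H) (phiB E v B) (phiH E v H') (phiB E v B'))) /\
  (* injective (sets compared extensionally) *)
  (forall H B H' B', admissible E H B -> admissible E H' B' ->
     (forall w, phiH E v H w <-> phiH E v H' w) ->
     (forall w, phiB E v B w <-> phiB E v B' w) ->
     (forall w, H w <-> H' w) /\ (forall w, B w <-> B' w)) /\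
  (* surjective onto AP(E_C^v) *)
  (forall K C : vert (cuntz_splice E v) -> Prop,
     admissible (cuntz_splice E v) K C ->
     exists H B, admissible E H B /\
       (forall w, phiH E v H w <-> K w) /\ (forall w, phiB E v B w <-> C w)).
Proof.
  intros _ _ [mu [_ [[Hp _] _]]].
  pose proof Hp as [_ [_ [[e1 [t1 [Hm1 Hs1]]] _]]].
  split; [|split; [|split]].
  - intros H B [Hh [Hs Hb]]. pose proof (step_her E H Hh) as Hst.
    split; [|split].
    + apply her_step. intros [e|[]]; simpl; auto.
    + intros [x|[]] Hreg Hall; simpl.
      * destruct (classic (x = v)) as [->|Hxv].
        -- exact (Hall (inr f1) eq_refl).
        -- apply Hs.
           ++ destruct Hreg as [[l Hl] [e0 He0]]. split.
              ** exists (flat_map unl l). intros e He. apply unl_in, Hl. simpl. congruence.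
              ** destruct e0 as [e|[]]; simpl in He0; try discriminate.
                 --- exists e. congruence.
                 --- congruence.
           ++ intros e He. exact (Hall (inl e) (f_equal inl He)).
      * exact (Hall (inr f2) eq_refl).
      * exact (Hall (inr k1) eq_refl).
    + intros [x|[]] Hx; simpl in Hx; try contradiction.
      destruct (Hb x Hx) as [Hinf [Hn [[l Hl] [e [He1 He2]]]]].
      split; [|split; [|split]].
      * intros [l' Hl']. apply Hinf. exists (flat_map unl l'). intros e' He'.
        apply unl_in, Hl'. simpl. congruence.
      * exact Hn.
      * exists (map inl l ++ [inr f1]). intros [e'|[]] [Hsc Hr]; simpl in *;
          apply in_or_app; try discriminate.
        -- left. apply in_map. apply Hl. split; congruence.
        -- right. simpl. auto.
      * exists (inl e). simpl. split; congruence.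
  - intros H B H' B' _ _. split.
    + intros [h1 h2]. split.
      * intros [x|[]]; simpl; auto.
      * intros [x|[]]; simpl; auto; intros [].
    + intros [h1 h2]. split; intros x; [exact (h1 (inl x)) | exact (h2 (inl x))].
  - intros H B H' B' _ _ h1 h2. split; intros x; [exact (h1 (inl x)) | exact (h2 (inl x))].
  - intros K C [Kh [Ks Kc]]. pose proof (step_her _ K Kh) as Kst.
    assert (A1 := Kst (inr f1)). assert (A2 := Kst (inr f2)).
    assert (A3 := Kst (inr h2)). assert (A4 := Kst (inr k1)).
    simpl in A1, A2, A3, A4.
    assert (Cu : forall u, ~ C (inr u)).
    { intros [] Hc; destruct (Kc _ Hc) as [Hinf _]; apply Hinf.
      - exists [inr f2; inr h1; inr h2]. intros [e|[]] He; simpl in He; try discriminate;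
          simpl; tauto.
      - exists [inr k1; inr k2]. intros [e|[]] He; simpl in He; try discriminate;
          simpl; tauto. }
    assert (KE : forall e, K (inl (sc e)) -> K (inl (rg e))) by (intros e; exact (Kst (inl e))).
    exists (fun x => K (inl x)), (fun x => C (inl x)). split; [|split].
    + split; [|split].
      * apply her_step. exact KE.
      * intros x [[l Hl] [e0 He0]] Hall. destruct (classic (x = v)) as [->|Hxv].
        -- eapply (path_back E (fun x => K (inl x)) KE mu v v Hp e1 t1 Hm1).
           apply Hall. exact Hs1.
        -- apply Ks.
           ++ split.
              ** exists (map inl l). intros [e|[]] He; simpl in He; try discriminate.
                 --- apply in_map, Hl. congruence.
                 --- congruence.
              ** exists (inl e0). simpl. congruence.
           ++ intros [e|[]] He; simpl in He; try discriminate.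
              --- apply Hall. congruence.
              --- congruence.
      * intros x Hx. destruct (Kc _ Hx) as [Hinf [Hn [[l Hl] [e0 [He0 Hre0]]]]].
        split; [|split; [|split]].
        -- intros [l' Hl']. apply Hinf. exists (map inl l' ++ [inr f1]).
           intros [e|[]] He; simpl in He; apply in_or_app; try discriminate.
           ++ left. apply in_map. apply Hl'. congruence.
           ++ right. simpl. auto.
        -- exact Hn.
        -- exists (flat_map unl l). intros e [He1 He2]. apply unl_in, Hl.
           simpl. split; [congruence | exact He2].
        -- destruct e0 as [e|[]]; simpl in He0, Hre0; try discriminate.
           ++ exists e. split; congruence.
           ++ injection He0 as <-. exists e1. split; [exact Hs1|].
              intro Hk. apply Hn.
              exact (path_back E (fun x => K (inl x)) KE mu v v Hp e1 t1 Hm1 Hk).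
    + intros [x|[]]; simpl; [tauto | tauto | ].
      split; intros; [apply A3, A1 | apply A2, A4]; assumption.
    + intros [x|u]; simpl; [tauto|]. split; [intros []| apply Cu].
Qed.
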